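(* Let $\pi\in S_N$ have no fixed points, and let $k=\#\{i\in[N]:\pi(i)<i\}$. Then there is a unique pair $(v,w)\in S_N\times S_N$ such that $w$ is $k$-Grassmannian, $v\le w$ in the Bruhat order, and $\pi=wv^{-1}$.
   Context: A permutation $w\in S_N$ is $k$-Grassmannian if $w(1)<\dots<w(N-k)$ and $w(N-k+1)<\dots<w(N)$. Products are composed right to left: $(wv^{-1})(j)=w(v^{-1}(j))$. *)

(* Defs.v *)
(* Permutations of [N] are {perm 'I_N} (0-indexed).
   MathComp convention: (s * t) x = t (s x), so the paper's product
   w v^{-1} (j |-> w (v^{-1} j)) is written  v^-1 * w. *)
From mathcomp Require Import all_boot all_fingroup.
Set Implicit Arguments. Unset Strict Implicit. Unset Printing Implicit Defensive.

Definition perm_length (N : nat) (x : {perm 'I_N}) : nat :=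
  #|[set p : 'I_N * 'I_N | (p.1 < p.2) && (x p.2 < x p.1)]|.

(* One Bruhat step: y = x t (paper convention, y(a) = x(t(a))) for a
   transposition t, with strictly larger length. *)
Definition bruhat_step (N : nat) : rel {perm 'I_N} :=
  fun x y => [exists i : 'I_N, exists j : 'I_N,
     (i != j) && (y == (tperm i j * x)%g) && (perm_length x < perm_length y)].

Definition bruhat_le (N : nat) (v w : {perm 'I_N}) : bool :=
  connect (@bruhat_step N) v w.

(* w is k-Grassmannian: increasing on positions 1..N-k and on N-k+1..N
   (0-indexed: on [0, N-k) and on [N-k, N)). *)
Definition k_grassmannian (N k : nat) (w : {perm 'I_N}) : Prop :=
  forall i j : 'I_N, i < j -> (j < N - k) || (N - k <= i) -> w i < w j.

(* Main.v *)
Require Import Defs.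
From mathcomp Require Import all_boot all_fingroup.
From mathcomp Require Import zify.
Set Implicit Arguments. Unset Strict Implicit. Unset Printing Implicit Defensive.

Section L.
Variable N : nat.
Implicit Types (x y z : {perm 'I_N}).

Lemma len_swap_lt z (i j : 'I_N) : i < j -> z j < z i ->
  perm_length (tperm i j * z)%g < perm_length z.
Proof.
move=> lij lz; rewrite /perm_length.
set t := tperm i j.
set Iy := [set p : 'I_N * 'I_N | _]; set Iz := [set p : 'I_N * 'I_N | _].
pose f (p : 'I_N * 'I_N) := if t p.1 < t p.2 then (t p.1, t p.2) else p.
have fin : {in Iy &, injective f}.
  move=> [p1 p2] [q1 q2]; rewrite !inE /= /f /= => /andP[lp _] /andP[lq _].
  case: ifP => hp; case: ifP => hq.
  - by case=> /perm_inj -> /perm_inj ->.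
  - by case=> e1 e2; move: hq; rewrite -e1 -e2 !tpermK lp.
  - by case=> e1 e2; move: hp; rewrite e1 e2 !tpermK lq.
  - by [].
have sub : f @: Iy \subset Iz :\ (i, j).
  apply/subsetP => q /imsetP[[p1 p2] hp ->]; move: hp.
  rewrite !inE /= /f !permM => /andP[lp hz].
  case: ifP => ht /=.
  - rewrite /= in ht; apply/and3P; split => //.
    apply/eqP => -[e1 e2].
    by move: lp; rewrite -(tpermK i j p1) -(tpermK i j p2) -/t e1 e2 tpermL tpermR ltnNge ltnW.

  - move: hz ht; rewrite /t.
    case: (tpermP i j p1) => [e1|e1|n1 n2]; case: (tpermP i j p2) => [e2|e2|m1 m2];
      subst; rewrite ?eqxx /=; try lia.
    1-2: move=> h1 h2; apply/and3P; split; try lia.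
    1-2: apply/eqP => -[] e; subst; first [ by apply m2 | by apply n1 ].
have := subset_leq_card sub; rewrite (card_in_imset fin).
have : (i, j) \in Iz by rewrite inE /= lij lz.
by rewrite (cardsD1 (i, j) Iz) => ->; rewrite add1n ltnS.
Qed.

Lemma tpM (i j l : 'I_N) x : (tperm i j * x)%g l = x (tperm i j l).
Proof. by rewrite permM. Qed.

Lemma step_inv x y : bruhat_step x y ->
  exists i j : 'I_N, [/\ i < j, x i < x j & y = (tperm i j * x)%g].
Proof.
case/existsP=> i /existsP[j /andP[/andP[nij /eqP ->] hl]].
have key (a b : 'I_N) : a < b -> perm_length x < perm_length (tperm a b * x)%g ->
    exists i j : 'I_N, [/\ i < j, x i < x j & (tperm a b * x)%g = (tperm i j * x)%g].
  move=> lab hl'; exists a, b; split => //.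
  case: (ltngtP (x a) (x b)) => // h.
  - have := len_swap_lt lab h; rewrite ltnNge => /negP; case.
    by rewrite ltnW.
  - by move/val_inj/perm_inj: h => e; move: lab; rewrite e ltnn.
case: (ltngtP i j) => h.
- exact: key.
- by rewrite tpermC; apply: key => //; rewrite tpermC.
- by move/val_inj: h nij => ->; rewrite eqxx.
Qed.

Lemma step_of x (i j : 'I_N) : i < j -> x i < x j -> bruhat_step x (tperm i j * x)%g.
Proof.
move=> lij lx; apply/existsP; exists i; apply/existsP; exists j.
rewrite eqxx andbT; apply/andP; split.
  by apply/eqP => e; move: lij; rewrite e ltnn.
set z := (tperm i j * x)%g.
have := @len_swap_lt z i j lij; rewrite /z !tpM tpermL tpermR tpermKg; exact.
Qed.

Lemma inv1 x y : connect (@bruhat_step N) x y -> forall (a : 'I_N) (c : nat),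
  (forall l : 'I_N, l <= a -> y l <= c) -> (forall l : 'I_N, l <= a -> x l <= c).
Proof.
case/connectP=> p; elim: p x => [|x1 p IH] x /= ; first by move=> _ ->.
case/andP=> hs hp ey a c hy.
have {}IH := IH x1 hp ey a c hy.
case/step_inv: hs hp IH => i [j [lij lx ->]] _ IH l hl.
have := IH l hl; rewrite tpM.
case: (tpermP i j l) => [e|e|n1 n2]; subst => //.
- lia.
- have := IH i (leq_trans (ltnW lij) hl); rewrite tpM tpermL; lia.
Qed.

Lemma inv2 x y : connect (@bruhat_step N) x y -> forall (a : 'I_N) (c : nat),
  (forall l : 'I_N, a <= l -> c <= y l) -> (forall l : 'I_N, a <= l -> c <= x l).
Proof.
case/connectP=> p; elim: p x => [|x1 p IH] x /= ; first by move=> _ ->.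
case/andP=> hs hp ey a c hy.
have {}IH := IH x1 hp ey a c hy.
case/step_inv: hs hp IH => i [j [lij lx ->]] _ IH l hl.
have := IH l hl; rewrite tpM.
case: (tpermP i j l) => [e|e|n1 n2]; subst => //.
- have := IH j (leq_trans hl (ltnW lij)); rewrite tpM tpermR; lia.
- lia.
Qed.
End L.

Section Chain.
Variables (N K : nat) (y : {perm 'I_N}).
Hypothesis gy : forall i j : 'I_N, i < j -> (j < K) || (K <= i) -> y i < y j.
Definition Cd (x : {perm 'I_N}) :=
  forall a : 'I_N, (a < K -> x a <= y a) /\ (K <= a -> y a <= x a).

Lemma neqv (u v : 'I_N) : u != v -> nat_of_ord u != nat_of_ord v.
Proof. by []. Qed.

Lemma yinj (a b : 'I_N) : y a = y b -> a = b.
Proof. by move/perm_inj. Qed.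
Lemma xinj (x : {perm 'I_N}) (a b : 'I_N) : val (x a) = val (x b) -> a = b.
Proof. by move/val_inj/perm_inj. Qed.

Lemma swapC (x : {perm 'I_N}) (i j : 'I_N) : i < j -> x i < x j -> Cd (tperm i j * x)%g ->
  exists x', bruhat_step x x' /\ Cd x'.
Proof. by move=> h1 h2 h3; exists (tperm i j * x)%g; split => //; apply: step_of. Qed.

Lemma stepSL (x : {perm 'I_N}) (b : 'I_N) : Cd x -> K <= b -> x b != y b -> K <= (x^-1)%g (y b) ->
  exists x', bruhat_step x x' /\ Cd x'.
Proof.
move=> Cx bK db.
set a := (x^-1)%g (y b) => aK.
have xa : x a = y b by rewrite /a permKV.
have ab : nat_of_ord a != b.
  by apply/eqP => /val_inj e; move: db; rewrite -xa e eqxx.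
have ybx : y b < x b by have := (Cx b).2 bK; have := neqv db; lia.
have yay : y a < y b.
  have := (Cx a).2 aK; rewrite xa => h.
  have : nat_of_ord (y a) != y b by apply/eqP => /val_inj /yinj e; move: ab; rewrite e eqxx.
  lia.
have lab : a < b.
  case: (ltngtP a b) => // h; last by move: ab; rewrite h eqxx.
  by have := gy h; rewrite bK orbT => /(_ isT); lia.
apply: (swapC lab); first by rewrite xa.
move=> l; rewrite tpM; case: (tpermP a b l) => [e|e|n1 n2]; subst.
- by split; lia.
- by rewrite xa; split; lia.
- exact: Cx.
Qed.

Lemma stepSA (x : {perm 'I_N}) (a : 'I_N) : Cd x -> a < K -> x a != y a -> (x^-1)%g (y a) < K ->
  exists x', bruhat_step x x' /\ Cd x'.
Proof.
move=> Cx aK da.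
set b := (x^-1)%g (y a) => bK.
have xb : x b = y a by rewrite /b permKV.
have ab : nat_of_ord a != b.
  by apply/eqP => /val_inj e; move: da; rewrite -xb e eqxx.
have xay : x a < y a by have := (Cx a).1 aK; have := neqv da; lia.
have yab : y a < y b.
  have := (Cx b).1 bK; rewrite xb => h.
  have : nat_of_ord (y a) != y b by apply/eqP => /val_inj /yinj e; move: ab; rewrite e eqxx.
  lia.
have lab : a < b.
  case: (ltngtP a b) => // h; last by move: ab; rewrite h eqxx.
  by have := gy h; rewrite aK /= => /(_ isT); lia.
apply: (swapC lab); first by rewrite xb.
move=> l; rewrite tpM; case: (tpermP a b l) => [e|e|n1 n2]; subst.
- by rewrite xb; split; lia.
- by split; lia.
- exact: Cx.
Qed.

Lemma step_ex (x : {perm 'I_N}) : Cd x -> x != y -> exists x', bruhat_step x x' /\ Cd x'.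
Proof.
move=> Cx nxy.
pose Pd (a : 'I_N) := (a < K) && (x a != y a).
case: (pickP Pd) => [a0 Pa0 | noF].
- case: (arg_maxnP (fun a => val (x a)) Pa0) => a /andP[aK da] amax.
  case: (ltnP ((x^-1)%g (y a)) K) => bK; first exact: stepSA bK.
  set b := (x^-1)%g (y a) in bK.
  have xb : x b = y a by rewrite /b permKV.
  have ab : nat_of_ord a != b by apply/eqP => /val_inj e; move: da; rewrite -xb e eqxx.
  have db : x b != y b.
    by rewrite xb; apply/eqP => /yinj e; move: ab; rewrite e eqxx.
  case: (leqP K ((x^-1)%g (y b))) => a'K; first exact: stepSL db a'K.
  set a' := (x^-1)%g (y b) in a'K.
  have xa' : x a' = y b by rewrite /a' permKV.
  have da' : Pd a'.
    rewrite /Pd a'K xa' /=; apply/eqP => /yinj e; move: a'K bK; rewrite e; lia.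
  have := amax a' da'; rewrite xa' => hmax.
  have {}hmax : nat_of_ord (y b) <= x a := hmax.
  have xay : x a < y a by have := (Cx a).1 aK; have := neqv da; lia.
  have lab : a < b by lia.
  apply: (swapC lab); first by rewrite xb.
  move=> l; rewrite tpM; case: (tpermP a b l) => [e|e|n1 n2]; subst.
  + by rewrite xb; split; lia.
  + by split; lia.
  + exact: Cx.
- have [b db] : exists b, x b != y b.
    apply/existsP; apply: contraR nxy => /existsPn h; apply/eqP/permP => b.
    by have := h b; rewrite negbK => /eqP.
  have bK : K <= b by have := noF b; rewrite /Pd db andbT; lia.
  apply: (stepSL Cx bK db).
  set a' := (x^-1)%g (y b).
  have xa' : x a' = y b by rewrite /a' permKV.
  case: (leqP K a') => // a'K.
  have := noF a'; rewrite /Pd a'K xa' /= => /negbFE /eqP /yinj e.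
  by move: a'K bK; rewrite e; lia.
Qed.

Lemma len_le (x : {perm 'I_N}) : perm_length x <= N * N.
Proof.
rewrite /perm_length; apply: leq_trans (max_card _) _.
by rewrite card_prod card_ord.
Qed.

Lemma chain (x : {perm 'I_N}) : Cd x -> connect (@bruhat_step N) x y.
Proof.
move=> Cx; have [n] := ubnP (N * N - perm_length x).
elim: n x Cx => // n IH x Cx hn.
case: (eqVneq x y) => [-> | nxy]; first exact: connect0.
have [x' [sx Cx']] := step_ex Cx nxy.
apply: connect_trans (connect1 sx) (IH x' Cx' _).
have [i [j [_ _ e]]] := step_inv sx.
move: sx; case/existsP=> i' /existsP[j' /andP[_ hl]].
have := len_le x'; lia.
Qed.
End Chain.

Section Grass.
Variables (N K : nat).
Definition incr (w : {perm 'I_N}) :=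
  forall i j : 'I_N, i < j -> (j < K) || (K <= i) -> w i < w j.

Lemma grass_H (S : {set 'I_N}) (w1 w2 : {perm 'I_N}) (a : 'I_N) :
  incr w1 -> incr w2 -> (forall b, (w1 b \in S) = (K <= b)) ->
  (forall b, (w2 b \in S) = (K <= b)) ->
  (forall b : 'I_N, b < a -> w1 b = w2 b) -> w1 a < w2 a -> False.
Proof.
move=> g1 g2 S1 S2 eqb lt.
set b := (w2^-1)%g (w1 a).
have w2b : w2 b = w1 a by rewrite /b permKV.
have blk : (K <= b) = (K <= a) by rewrite -S2 w2b S1.
case: (ltngtP b a) => h.
- by have := eqb b h; rewrite w2b => /perm_inj e; move: h; rewrite e ltnn.
- have := g2 a b h; rewrite w2b.
  case: (leqP K a) => hK.
  + by rewrite orbT => /(_ isT); lia.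
  + have bK : b < K by rewrite ltnNge blk -ltnNge.
    by rewrite bK => /(_ isT); lia.
- by move/val_inj: h => e; move: lt; rewrite -w2b e ltnn.
Qed.

Lemma grass_eq (S : {set 'I_N}) (w1 w2 : {perm 'I_N}) :
  incr w1 -> incr w2 -> (forall b, (w1 b \in S) = (K <= b)) ->
  (forall b, (w2 b \in S) = (K <= b)) -> w1 = w2.
Proof.
move=> g1 g2 S1 S2; apply/permP => a.
have : forall n (a : 'I_N), a < n -> w1 a = w2 a.
  elim=> // n IH c hc.
  case: (ltnP c n) => h; first exact: IH.
  have eqb : forall b : 'I_N, b < c -> w1 b = w2 b.
    by move=> b hb; apply: IH; lia.
  case: (ltngtP (w1 c) (w2 c)) => h'.
  - by case: (grass_H g1 g2 S1 S2 eqb h').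
  - have eqb' : forall b : 'I_N, b < c -> w2 b = w1 b by move=> b /eqb ->.
    by case: (grass_H g2 g1 S2 S1 eqb' h').
  - exact: val_inj.
by move/(_ a.+1 a (ltnSn _)).
Qed.

Lemma inc_A (A : {set 'I_N}) : sorted ltn (map val (enum A)).
Proof.
  rewrite -[enum _](eq_filter (mem_enum _)).
  rewrite -(eq_filter (mem_map val_inj _)) -filter_map.
  by rewrite (sorted_filter ltn_trans) // unlock val_ord_enum iota_ltn_sorted.
Qed.

Lemma nth_enum_lt (A : {set 'I_N}) (d : 'I_N) i j : i < j -> j < #|A| ->
  nth d (enum A) i < nth d (enum A) j.
Proof.
move=> lij ljA.
have hs := sorted_ltn_nth ltn_trans 0 (inc_A A).
rewrite cardE in ljA.
have := hs i j; rewrite !inE size_map.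
rewrite !(nth_map d) //; last exact: ltn_trans ljA.
by apply => //; exact: ltn_trans ljA.
Qed.

Lemma grass_ex (S : {set 'I_N}) : #|S| + K = N ->
  exists w : {perm 'I_N}, incr w /\ forall a, (w a \in S) = (K <= a).
Proof.
move=> hS.
have hC : #|~: S| = K by have := cardsC S; rewrite card_ord; lia.
pose f (a : 'I_N) := if a < K then nth a (enum (~: S)) a else nth a (enum S) (a - K).
have fS a : (f a \in S) = (K <= a).
  rewrite /f; case: ltnP => h.
  + have : nth a (enum (~: S)) a \in ~: S.
      by rewrite -mem_enum mem_nth // -cardE hC.
    by rewrite inE => /negbTE ->.
  + have : nth a (enum S) (a - K) \in S.
      rewrite -mem_enum mem_nth // -cardE; have := ltn_ord a; by rewrite ltn_subLR // addnC hS.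
    by move=> ->.
have fi : forall i j : 'I_N, i < j -> (j < K) || (K <= i) -> f i < f j.
  move=> i j lij hb; rewrite /f.
  case/orP: hb => hb.
  + have hi : i < K by lia.
    rewrite hb hi (set_nth_default i j); last by rewrite -cardE hC.
    by rewrite (nth_enum_lt _ lij) ?hC.
  + have hj : K <= j by lia.
    have -> : (i < K) = false by rewrite ltnNge hb.
    have -> : (j < K) = false by rewrite ltnNge hj.
    rewrite (set_nth_default i j); last first.
      by rewrite -cardE ltn_subLR // addnC hS.
    rewrite nth_enum_lt //; first lia.
    by rewrite ltn_subLR // addnC hS.
have finj : injective f.
  move=> i j e; apply/val_inj/eqP; case: (ltngtP i j) => // h.
  - case: (ltnP j K) => hj.
      by have := fi i j h; rewrite hj e ltnn => /(_ isT).
    case: (leqP K i) => hi.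
      by have := fi i j h; rewrite hi orbT e ltnn => /(_ isT).
    by move: (fS i) (fS j); rewrite e hj leqNgt hi => ->.
  - case: (ltnP i K) => hi.
      by have := fi j i h; rewrite hi e ltnn => /(_ isT).
    case: (leqP K j) => hj.
      by have := fi j i h; rewrite hj orbT e ltnn => /(_ isT).
    by move: (fS i) (fS j); rewrite e hi leqNgt hj => ->.
exists (perm finj); split.
  by move=> i j h hb; rewrite !permE; apply: fi.
by move=> a; rewrite permE fS.
Qed.
End Grass.

Theorem corollary3p1 (N : nat) (pi : {perm 'I_N}) :
  (forall i : 'I_N, pi i != i) ->
  let k := #|[set i : 'I_N | pi i < i]| in
  exists! vw : {perm 'I_N} * {perm 'I_N},
    k_grassmannian k vw.2 /\ bruhat_le vw.1 vw.2 /\ pi = (vw.1^-1 * vw.2)%g.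
Proof.
move=> fp k.
set D := [set i : 'I_N | pi i < i].
have kD : k = #|D| by [].
have kN : k <= N by rewrite kD; apply: leq_trans (max_card _) _; rewrite card_ord.
set S := pi @: D.
have cS : #|S| + (N - k) = N.
  rewrite card_imset; last exact: perm_inj.
  rewrite -kD; move: kN; clear; lia.
have fpv (a : 'I_N) : nat_of_ord (pi a) != a by apply: fp.
have [w [gw wS]] := grass_ex cS.
exists ((w * pi^-1)%g, w); split.
  split; first exact: gw.
  split; last by rewrite /= invMg invgK -mulgA mulVg mulg1.
  apply: (chain (K := N - k)) => //= a.
  rewrite permM; set d := (pi^-1)%g (w a).
  have pd : pi d = w a by rewrite /d permKV.
  have := fpv d; rewrite pd => nd.
  split => hK.
  - have : w a \notin S by rewrite wS -ltnNge.
    rewrite -pd mem_imset; last exact: perm_inj.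
    rewrite inE -leqNgt pd; lia.
  - have : w a \in S by rewrite wS.
    rewrite -pd mem_imset; last exact: perm_inj.
    rewrite inE pd; lia.
move=> [v' w'] /= [gw' [bl e]].
have ew : w' = (v' * pi)%g by rewrite e mulgA mulgV mul1g.
have wpv a : w' a = pi (v' a) by rewrite ew permM.
have w'S : forall a, (w' a \in S) = (N - k <= a).
  move=> a; rewrite wpv mem_imset; last exact: perm_inj.
  rewrite inE -wpv; have := fpv (v' a); rewrite -wpv => nd.
  case: (leqP (N - k) a) => hK.
  - have := @inv2 N v' w' bl a (w' a).
    have h : forall l : 'I_N, a <= l -> w' a <= w' l.
      move=> l; rewrite leq_eqVlt => /orP[/eqP/val_inj -> // | hl].
      by apply: ltnW; apply: gw' => //; rewrite hK orbT.
    move/(_ h a (leqnn _)) => h'; apply/idP; lia.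
  - have := @inv1 N v' w' bl a (w' a).
    have h : forall l : 'I_N, l <= a -> w' l <= w' a.
      move=> l; rewrite leq_eqVlt => /orP[/eqP/val_inj -> // | hl].
      by apply: ltnW; apply: gw' => //; rewrite hK.
    move/(_ h a (leqnn _)) => h'; apply/negbTE; rewrite -leqNgt; lia.
have ww : w' = w by apply: (grass_eq (K := N - k) (S := S)).
by rewrite -ww ew mulgK.
Qed.
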